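(* Let $\gamma\in\mathbb{R}$ and $|a|$ small. For every $\tau\in(-1/2,1/2]\setminus\{0\}$, the $L^2(\mathbb{T})$-spectrum of $\mathcal H_a(\gamma,\tau)$ is symmetric with respect to reflection through the imaginary axis: if $\mu$ is in the spectrum, so is $-\overline{\mu}$.
   Context: Here $\rho,\phi\in\mathbb{R}$, $k>0$, and $w$, $c$ describe the small-amplitude periodic traveling wave of the Konopelchenko–Dubrovsky equation: $w$ is smooth, real, even and $2\pi$-periodic, $w(z)=a\cos z+a^2(A_0+A_2\cos 2z)+a^3A_3\cos 3z+O(a^4)$, $c=k^2+a^2c_2+O(a^4)$, with $A_0=-\frac{3\rho}{2k^2}$, $A_2=\frac{\rho}{2k^2}$, $A_3=-\frac{\phi^2}{64k^2}+\frac{3\rho^2}{16k^4}$, $c_2=\frac{3\phi^2}{8}+\frac{15\rho^2}{2k^2}$. The operator $\mathcal H_a(\gamma,\tau)=kc(\partial_z+i\tau)+k^3(\partial_z+i\tau)^3+6k\rho(\partial_z+i\tau)(w\,\cdot)-\tfrac32\phi^2k(\partial_z+i\tau)(w^2\,\cdot)-\big(\frac{3\gamma^2}{k}+3i\phi\gamma w_z\big)(\partial_z+i\tau)^{-1}$ acts in $L^2(\mathbb{T})$ ($2\pi$-periodic square-integrable functions). *)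

(* Defs.v *)
From Stdlib Require Import Reals ZArith.
From Coquelicot Require Import Coquelicot.
Open Scope R_scope.

(* Sum over Z, split into n >= 0 and n < 0, real and imaginary parts
   separately (used only for absolutely convergent series). *)
Definition sumZ (s : Z -> C) : C :=
  (Series (fun n => Re (s (Z.of_nat n))) + Series (fun n => Re (s (- Z.of_nat (S n))%Z)),
   Series (fun n => Im (s (Z.of_nat n))) + Series (fun n => Im (s (- Z.of_nat (S n))%Z))).

Definition summableZ (s : Z -> R) : Prop :=
  ex_series (fun n => s (Z.of_nat n)) /\ ex_series (fun n => s (- Z.of_nat (S n))%Z).

Definition sumZR (s : Z -> R) : R :=
  Series (fun n => s (Z.of_nat n)) + Series (fun n => s (- Z.of_nat (S n))%Z).

(* f in L^2(T) is identified with its Fourier coefficients (f_n)_{n in Z},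
   f(z) = sum_n f_n e^{inz}; Parseval makes this a unitary identification. *)
Definition in_l2 (f : Z -> C) : Prop := summableZ (fun n => (Cmod (f n))^2).
Definition l2norm (f : Z -> C) : R := sqrt (sumZR (fun n => (Cmod (f n))^2)).
(* H^3(T): the natural domain of the third-order operator *)
Definition in_H3 (f : Z -> C) : Prop :=
  summableZ (fun n => (1 + (IZR n)^2)^3 * (Cmod (f n))^2).

(* Fourier coefficient of a real 2pi-periodic continuous function:
   g_n = (1/2pi) int_0^{2pi} g(z) e^{-inz} dz *)
Definition fcoef (g : R -> R) (n : Z) : C :=
  (/ (2 * PI) * RInt (fun z => g z * cos (IZR n * z)) 0 (2 * PI),
   - (/ (2 * PI) * RInt (fun z => g z * sin (IZR n * z)) 0 (2 * PI))).

(* Fourier side of multiplication by g : (g f)_n = sum_m g_{n-m} f_m *)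
Definition mulF (g : R -> R) (f : Z -> C) (n : Z) : C :=
  sumZ (fun m => (fcoef g (n - m)%Z * f m)%C).

(* symbol of (d_z + i tau) on e^{inz} : i (n + tau) *)
Definition Dsym (tau : R) (n : Z) : C := (0, IZR n + tau).

(* The operator H_a(gamma,tau) for given wave profile w, speed c, in the
   Fourier picture:
   H = k c (d+i tau) + k^3 (d+i tau)^3 + 6 k rho (d+i tau)(w .)
       - 3/2 phi^2 k (d+i tau)(w^2 .)
       - (3 gamma^2/k + 3 i phi gamma w_z) (d + i tau)^{-1}        *)
Definition Hop (k rho phi : R) (w : R -> R) (c gamma tau : R)
    (f : Z -> C) (n : Z) : C :=
  let D := Dsym tau in
  (RtoC (k * c) * D n * f n
   + RtoC (k ^ 3) * (D n * D n * D n) * f n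
   + RtoC (6 * k * rho) * D n * mulF w f n
   - RtoC (3 / 2 * phi ^ 2 * k) * D n * mulF (fun z => ((w z) ^ 2)%R) f n
   - RtoC (3 * gamma ^ 2 / k) * (f n / D n)
   - (0, (3 * phi * gamma)%R) * mulF (Derive w) (fun m => f m / D m) n)%C.

Definition in_resolvent (H : (Z -> C) -> (Z -> C)) (mu : C) : Prop :=
  (forall g, in_l2 g ->
     exists f, in_H3 f /\ (forall n, (H f n - mu * f n)%C = g n) /\
       (forall f', in_H3 f' -> (forall n, (H f' n - mu * f' n)%C = g n) -> f' = f)) /\
  (exists K : R, 0 <= K /\ forall f g, in_H3 f -> in_l2 g ->
     (forall n, (H f n - mu * f n)%C = g n) -> l2norm f <= K * l2norm g).

Definition in_spectrum (H : (Z -> C) -> (Z -> C)) (mu : C) : Prop :=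
  ~ in_resolvent H mu.

Definition smooth (g : R -> R) : Prop := forall n x, ex_derive_n g n x.

(* Main.v *)
Require Import Defs.
From Stdlib Require Import Reals ZArith.
From Coquelicot Require Import Coquelicot.
From Stdlib Require Import Lra FunctionalExtensionality.
Open Scope R_scope.

Lemma trig_int (n : Z) : sin (IZR n * (2 * PI)) = 0 /\ cos (IZR n * (2 * PI)) = 1.
Proof.
  assert (h : sin (IZR n * PI) = 0) by (apply sin_eq_0_1; exists n; ring).
  replace (IZR n * (2 * PI)) with (2 * (IZR n * PI)) by ring.
  rewrite sin_2a, cos_2a_sin, h. split; ring.
Qed.

Lemma sin_refl (n : Z) z : sin (IZR n * (2 * PI - z)) = - sin (IZR n * z).
Proof.
  destruct (trig_int n) as [h1 h2].
  replace (IZR n * (2 * PI - z)) with (IZR n * (2 * PI) - IZR n * z) by ring.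
  rewrite sin_minus, h1, h2. ring.
Qed.

Lemma cos_refl (n : Z) z : cos (IZR n * (2 * PI - z)) = cos (IZR n * z).
Proof.
  destruct (trig_int n) as [h1 h2].
  replace (IZR n * (2 * PI - z)) with (IZR n * (2 * PI) - IZR n * z) by ring.
  rewrite cos_minus, h1, h2. ring.
Qed.

Lemma RInt_anti (h : R -> R) (hc : forall z, continuous h z)
  (hs : forall z, h (2 * PI - z) = - h z) : RInt h 0 (2 * PI) = 0.
Proof.
  assert (ex : forall a b, ex_RInt h a b) by (intros; apply (@ex_RInt_continuous R_CompleteNormedModule); auto).
  pose proof (RInt_comp_lin h (-1) (2 * PI) 0 (2 * PI) (ex _ _)) as E.
  replace (-1 * 0 + 2 * PI) with (2 * PI) in E by ring.
  replace (-1 * (2 * PI) + 2 * PI) with 0 in E by ring.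
  rewrite <- (opp_RInt_swap h 0 (2 * PI) (ex _ _)) in E.
  rewrite (RInt_ext _ h) in E.
  - change (opp (RInt h 0 (2 * PI))) with (- RInt h 0 (2 * PI)) in E. lra.
  - intros x _. change (-1 * (h (-1 * x + 2 * PI)) = h x).
    replace (-1 * x + 2 * PI) with (2 * PI - x) by ring. rewrite hs. ring.
Qed.

Lemma ex_sin n z : ex_derive (fun z => sin (IZR n * z)) z.
Proof. auto_derive. trivial. Qed.
Lemma ex_cos n z : ex_derive (fun z => cos (IZR n * z)) z.
Proof. auto_derive. trivial. Qed.

Lemma fcoef_real (g : R -> R) (hd : forall z, ex_derive g z)
  (hs : forall z, g (2 * PI - z) = g z) n : Im (fcoef g n) = 0.
Proof.
  unfold fcoef, Im; simpl.
  rewrite RInt_anti. ring.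
  - intros z. apply (@ex_derive_continuous R_AbsRing R_NormedModule). apply ex_derive_mult; auto. apply ex_sin.
  - intros z. rewrite hs, sin_refl. ring.
Qed.

Lemma fcoef_imag (g : R -> R) (hd : forall z, ex_derive g z)
  (hs : forall z, g (2 * PI - z) = - g z) n : Re (fcoef g n) = 0.
Proof.
  unfold fcoef, Re; simpl.
  rewrite RInt_anti. ring.
  - intros z. apply (@ex_derive_continuous R_AbsRing R_NormedModule). apply ex_derive_mult; auto. apply ex_cos.
  - intros z. rewrite hs, cos_refl. ring.
Qed.

Lemma Cconj_RtoC r : Cconj (RtoC r) = RtoC r.
Proof. unfold Cconj, RtoC; simpl. f_equal; ring. Qed.

Lemma sumZ_conj s : Cconj (sumZ s) = sumZ (fun m => Cconj (s m)).
Proof.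
  unfold sumZ, Cconj, Re, Im; simpl.
  rewrite !Series_opp. f_equal; ring.
Qed.
Lemma sumZ_opp s : sumZ (fun m => - s m)%C = (- sumZ s)%C.
Proof.
  unfold sumZ, Copp, Re, Im; simpl.
  rewrite !Series_opp. f_equal; ring.
Qed.

Lemma mulF_conj_real g f n : (forall j, Im (fcoef g j) = 0) ->
  Cconj (mulF g f n) = mulF g (fun m => Cconj (f m)) n.
Proof.
  intros h. unfold mulF. rewrite sumZ_conj. f_equal. apply functional_extensionality; intros m.
  rewrite Cmult_conj. f_equal. specialize (h (n - m)%Z). destruct (fcoef g (n - m)%Z) as [x y].
  unfold Im in h; simpl in h. subst. unfold Cconj; simpl. f_equal; ring.
Qed.

Lemma mulF_conj_imag g f n : (forall j, Re (fcoef g j) = 0) ->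
  Cconj (mulF g f n) = (- mulF g (fun m => Cconj (f m)) n)%C.
Proof.
  intros h. unfold mulF. rewrite sumZ_conj, <- sumZ_opp. f_equal. apply functional_extensionality; intros m.
  rewrite Cmult_conj. specialize (h (n - m)%Z). destruct (fcoef g (n - m)%Z) as [x y].
  unfold Re in h; simpl in h. subst. unfold Cconj; simpl.
  replace (0, - y) with (- (0, y))%C. ring. unfold Copp; simpl. f_equal; ring.
Qed.

Lemma mulF_opp g f n : mulF g (fun m => - f m)%C n = (- mulF g f n)%C.
Proof.
  unfold mulF. rewrite <- sumZ_opp. f_equal. apply functional_extensionality; intros m. ring.
Qed.

Lemma conj_D tau m : Cconj (Dsym tau m) = (- Dsym tau m)%C.
Proof. unfold Cconj, Dsym, Copp; simpl. f_equal; ring. Qed.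

Lemma conj_invD tau m : Cconj (/ Dsym tau m) = (- / Dsym tau m)%C.
Proof. unfold Cconj, Dsym, Copp, Cinv; simpl. f_equal; unfold Rdiv; ring. Qed.

Lemma conj_divD x tau m : Cconj (x / Dsym tau m) = (- (Cconj x / Dsym tau m))%C.
Proof. unfold Cdiv. rewrite Cmult_conj, conj_invD. ring. Qed.


Lemma Hop_anti k rho phi w c gamma tau
  (h1 : forall j, Im (fcoef w j) = 0)
  (h2 : forall j, Im (fcoef (fun z => (w z ^ 2)%R) j) = 0)
  (h3 : forall j, Re (fcoef (Derive w) j) = 0) f n :
  Cconj (Hop k rho phi w c gamma tau f n) =
  (- Hop k rho phi w c gamma tau (fun m => Cconj (f m)) n)%C.
Proof.
  unfold Hop; cbv zeta.
  rewrite !Cminus_conj, !Cplus_conj, !Cmult_conj, !Cconj_RtoC, conj_D, conj_divD.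
  rewrite (mulF_conj_real w f n h1), (mulF_conj_real _ f n h2), (mulF_conj_imag _ _ n h3).
  replace (fun m => Cconj (f m / Dsym tau m)) with (fun m => - (Cconj (f m) / Dsym tau m))%C
    by (apply functional_extensionality; intros; rewrite conj_divD; reflexivity).
  rewrite mulF_opp.
  replace (Cconj (0, (3 * phi * gamma)%R)) with (- (0, (3 * phi * gamma)%R))%C
    by (unfold Cconj, Copp; simpl; f_equal; ring).
  ring.
Qed.
Definition Sc (f : Z -> C) : Z -> C := fun n => Cconj (f n).

Lemma Sc_Sc f : Sc (Sc f) = f.
Proof. apply functional_extensionality; intros; unfold Sc; apply Cconj_conj. Qed.

Lemma Sc_l2 f : in_l2 (fun n => - Sc f n)%C <-> in_l2 f.
Proof.
  unfold in_l2. replace (fun n => Cmod (- Sc f n)%C ^ 2) with (fun n => Cmod (f n) ^ 2). tauto.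
  apply functional_extensionality; intros; unfold Sc; rewrite Cmod_opp, Cmod_conj; auto.
Qed.
Lemma Sc_l2norm f : l2norm (fun n => - Sc f n)%C = l2norm f.
Proof.
  unfold l2norm. replace (fun n => Cmod (- Sc f n)%C ^ 2) with (fun n => Cmod (f n) ^ 2). auto.
  apply functional_extensionality; intros; unfold Sc; rewrite Cmod_opp, Cmod_conj; auto.
Qed.
Lemma Sc_l2norm' f : l2norm (Sc f) = l2norm f.
Proof.
  unfold l2norm. replace (fun n => Cmod (Sc f n) ^ 2) with (fun n => Cmod (f n) ^ 2). auto.
  apply functional_extensionality; intros; unfold Sc; rewrite Cmod_conj; auto.
Qed.
Lemma Sc_H3 f : in_H3 (Sc f) <-> in_H3 f.
Proof.
  unfold in_H3. replace (fun n => (1 + IZR n ^ 2) ^ 3 * Cmod (Sc f n) ^ 2)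
    with (fun n => (1 + IZR n ^ 2) ^ 3 * Cmod (f n) ^ 2). tauto.
  apply functional_extensionality; intros; unfold Sc; rewrite Cmod_conj; auto.
Qed.

Section Tr.
Variable H : (Z -> C) -> (Z -> C).
Hypothesis anti : forall f n, Cconj (H f n) = (- H (Sc f) n)%C.

Lemma transfer f mu g f' mu' g' :
  mu' = (- Cconj mu)%C -> (forall n, g' n = (- Cconj (g n))%C) -> f' = Sc f ->
  (forall n, (H f n - mu * f n)%C = g n) -> (forall n, (H f' n - mu' * f' n)%C = g' n).
Proof.
  intros -> hg -> E n. rewrite hg, <- (E n).
  rewrite Cminus_conj, Cmult_conj, anti. unfold Sc. ring.
Qed.

Lemma res_transfer mu : in_resolvent H (- Cconj mu)%C -> in_resolvent H mu.
Proof.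
  intros [Hex [K [HK Hb]]]. split.
  - intros g hg.
    destruct (Hex (fun n => - Sc g n)%C) as [f' [h3 [eq' un']]].
    { apply Sc_l2; auto. }
    exists (Sc f'). split; [apply Sc_H3; auto|]. split.
    + apply (transfer f' (- Cconj mu)%C (fun n => - Sc g n)%C); auto.
      * rewrite Copp_conj, Cconj_conj. ring.
      * intros n. unfold Sc. rewrite Copp_conj, Cconj_conj. ring.
    + intros f'' h3'' E''.
      assert (Sc f'' = f').
      { apply un'. apply Sc_H3; auto.
        apply (transfer f'' mu g); auto. }
      rewrite <- H0, Sc_Sc. auto.
  - exists K. split; auto. intros f g h3 hl E.
    rewrite <- Sc_l2norm', <- (Sc_l2norm g).
    apply Hb. apply Sc_H3; auto. apply Sc_l2; auto.
    apply (transfer f mu g); auto.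
Qed.
End Tr.

Theorem lemma2p4 (rho phi k : R) (hk : 0 < k)
  (w : R -> R -> R) (c : R -> R) (a1 : R) (ha1 : 0 < a1)
  (* the small-amplitude periodic traveling wave family, parametrized by a *)
  (hsmooth : forall a, Rabs a < a1 -> smooth (w a))
  (heven : forall a, Rabs a < a1 -> forall z, w a (- z) = w a z)
  (hper : forall a, Rabs a < a1 -> forall z, w a (z + 2 * PI) = w a z)
  (hexp : exists M : R, forall a, Rabs a < a1 ->
     (forall z, Rabs (w a z - (a * cos z
        + a ^ 2 * (- (3 * rho) / (2 * k ^ 2) + rho / (2 * k ^ 2) * cos (2 * z))
        + a ^ 3 * (- phi ^ 2 / (64 * k ^ 2) + 3 * rho ^ 2 / (16 * k ^ 4)) * cos (3 * z)))
        <= M * Rabs a ^ 4) /\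
     Rabs (c a - (k ^ 2 + a ^ 2 * (3 * phi ^ 2 / 8 + 15 * rho ^ 2 / (2 * k ^ 2))))
        <= M * Rabs a ^ 4) :
  exists a0 : R, 0 < a0 /\
    forall a : R, Rabs a < a0 ->
    forall gamma tau : R, -1/2 < tau <= 1/2 -> tau <> 0 ->
    forall mu : C,
      in_spectrum (Hop k rho phi (w a) (c a) gamma tau) mu ->
      in_spectrum (Hop k rho phi (w a) (c a) gamma tau) (Copp (Cconj mu)).
Proof.
  exists a1. split; [exact ha1|].
  intros a ha gamma tau _ _ mu hs hr. apply hs.
  assert (hd : forall z, ex_derive (w a) z).
  { intros z. exact (hsmooth a ha 1%nat z). }
  assert (hd2 : forall z, ex_derive (Derive (w a)) z).
  { intros z. exact (hsmooth a ha 2%nat z). }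
  assert (sym : forall z, w a (2 * PI - z) = w a z).
  { intros z. replace (2 * PI - z) with (- z + 2 * PI) by ring.
    rewrite hper by exact ha. apply heven; exact ha. }
  assert (dsym : forall z, Derive (w a) (2 * PI - z) = - Derive (w a) z).
  { intros z.
    rewrite (Derive_ext (w a) (fun t => w a (2 * PI - t)) z) by (intros; rewrite sym; auto).
    rewrite (Derive_comp (w a) (fun t => 2 * PI - t) z) by (auto; auto_derive; auto).
    assert (E1 : Derive (fun t : R => 2 * PI - t) z = -1) by (apply is_derive_unique; auto_derive; auto; ring). rewrite E1.
    ring. }
  assert (h2 : forall j, Im (fcoef (fun z => (w a z ^ 2)%R) j) = 0).
  { apply fcoef_real.
    + intros z. auto_derive. auto.
    + intros z. simpl. rewrite sym. auto. }
  apply (res_transfer _ (Hop_anti k rho phi (w a) (c a) gamma tau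
     (fcoef_real _ hd sym) h2 (fcoef_imag _ hd2 dsym))).
  exact hr.
Qed.
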